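(* Identify $\mathbb{C}^4$ with $\mathbb{R}^8$. Let $\omega=e^{2\pi i/3}$, $\mathcal{E}=\mathbb{Z}[\omega]$, and $\theta=\omega-\bar\omega$. For a finite set $S\subset\mathbb{C}^4$ let $\langle S\rangle_{\mathcal E}$ denote the set of $\mathcal{E}$-linear combinations of elements of $S$. Define six sets of four vectors: $S_1=\{(\theta,0,0,0),(0,\theta,0,0),(0,0,\theta,0),(0,0,0,\theta)\}$; $S_2=\{(0,1,-1,1),(1,0,-1,-1),(1,-1,0,1),(1,1,1,0)\}$; $S_3=\{(0,1,-1,\omega),(1,0,-\omega,-\bar\omega),(1,-\omega,0,\bar\omega),(1,\omega,\omega,0)\}$; $S_4=\{(0,1,-\omega,\omega),(1,0,-\omega,-\omega),(1,-1,0,\omega),(1,1,\omega,0)\}$; $S_5=\{(0,1,-\omega,\bar\omega),(1,0,-\bar\omega,-1),(1,-\omega,0,1),(1,\omega,\bar\omega,0)\}$; $S_6=\{(0,1,-\omega,1),(1,0,-1,-\bar\omega),(1,-\bar\omega,0,\bar\omega),(1,\bar\omega,1,0)\}$; and for $j=3,4,5,6$ let $S_{j+4}=\overline{S_j}$ be obtained by complex-conjugating every coordinate. Let $\Lambda_k=\langle S_k\rangle_{\mathcal E}$ for $k=1,\dots,10$ (each a copy of $\mathcal{E}^4\cong A_2^4$). Then $$\Lambda_1\cap\cdots\cap\Lambda_{10}=\Lambda_1\cap\Lambda_2=\langle \theta(\theta,0,0,0),\ \theta(0,\theta,0,0),\ \theta(1,1,1,0),\ \theta(0,1,-1,1)\rangle_{\mathcal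 E},$$ and this lattice is a copy of the $E_8$ lattice.
   Context: $\mathcal{E}=\{a+b\omega:a,b\in\mathbb{Z}\}$ is the ring of Eisenstein integers; regarded as a real 2-dimensional lattice it is similar to the hexagonal lattice $A_2$. $E_8$ is the 8-dimensional root lattice (up to similarity). *)

(* Defs.v *)
(* complex numbers are modelled by algC (algebraic complex numbers);
   all vectors involved have algebraic coordinates. *)
From HB Require Import structures.
From mathcomp Require Import all_boot all_order all_algebra all_field.
Set Implicit Arguments. Unset Strict Implicit. Unset Printing Implicit Defensive.
Import Order.TTheory GRing.Theory Num.Theory.
Local Open Scope ring_scope.

(* omega = e^{2 pi i/3} = (-1 + i sqrt 3)/2 *)
Definition omega : algC := (-1 + 'i * sqrtC 3%:R) / 2%:R.
Definition omegab : algC := omega^*.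
Definition theta : algC := omega - omegab.

Definition is_eis (z : algC) : Prop :=
  exists a b : int, z = a%:~R + b%:~R * omega.

Definition vec4 (a b c d : algC) : 'rV[algC]_4 :=
  \row_(i < 4) nth 0 [:: a; b; c; d] i.

Definition espan (s : 'I_4 -> 'rV[algC]_4) (v : 'rV[algC]_4) : Prop :=
  exists c : 'I_4 -> algC, (forall i, is_eis (c i)) /\ v = \sum_(i < 4) c i *: s i.

Definition fam4 (a b c d : 'rV[algC]_4) : 'I_4 -> 'rV[algC]_4 :=
  fun i => nth 0 [:: a; b; c; d] i.

Definition w := omega.
Definition wb := omegab.

Definition S1 := fam4 (vec4 theta 0 0 0) (vec4 0 theta 0 0) (vec4 0 0 theta 0) (vec4 0 0 0 theta).
Definition S2 := fam4 (vec4 0 1 (-1) 1) (vec4 1 0 (-1) (-1)) (vec4 1 (-1) 0 1) (vec4 1 1 1 0).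
Definition S3 := fam4 (vec4 0 1 (-1) w) (vec4 1 0 (-w) (-wb)) (vec4 1 (-w) 0 wb) (vec4 1 w w 0).
Definition S4 := fam4 (vec4 0 1 (-w) w) (vec4 1 0 (-w) (-w)) (vec4 1 (-1) 0 w) (vec4 1 1 w 0).
Definition S5 := fam4 (vec4 0 1 (-w) wb) (vec4 1 0 (-wb) (-1)) (vec4 1 (-w) 0 1) (vec4 1 w wb 0).
Definition S6 := fam4 (vec4 0 1 (-w) 1) (vec4 1 0 (-1) (-wb)) (vec4 1 (-wb) 0 wb) (vec4 1 wb 1 0).

Definition conjS (s : 'I_4 -> 'rV[algC]_4) : 'I_4 -> 'rV[algC]_4 :=
  fun i => map_mx (fun z : algC => z^*) (s i).

Definition S (k : nat) : 'I_4 -> 'rV[algC]_4 :=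
  match k with
  | 1 => S1 | 2 => S2 | 3 => S3 | 4 => S4 | 5 => S5 | 6 => S6
  | 7 => conjS S3 | 8 => conjS S4 | 9 => conjS S5 | _ => conjS S6
  end.

Definition Lam (k : nat) : 'rV[algC]_4 -> Prop := espan (S k).

Definition T := fam4 (theta *: vec4 theta 0 0 0) (theta *: vec4 0 theta 0 0)
                     (theta *: vec4 1 1 1 0) (theta *: vec4 0 1 (-1) 1).

(* identification C^4 = R^8 : (z_1,..,z_4) |-> (Re z_1, Im z_1, ..., Re z_4, Im z_4);
   R^8 is represented by real-valued rows of algC *)
Definition toR8 (v : 'rV[algC]_4) : 'rV[algC]_8 :=
  \row_(j < 8) (if odd j then 'Im (v 0 (inord j./2)) else 'Re (v 0 (inord j./2))).

Definition E8 (x : 'rV[algC]_8) : Prop :=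
  (exists z : 'I_8 -> int,
      x = \row_(i < 8) (z i)%:~R \/ x = \row_(i < 8) ((z i)%:~R + 2%:R^-1))
  /\ exists m : int, \sum_(i < 8) x 0 i = (2 * m)%:~R.

(* L (a subset of C^4 = R^8) is similar to E8: there is a real similarity
   M (M M^T = c I, c > 0) of R^8 mapping L onto E8 *)
Definition similar_to_E8 (L : 'rV[algC]_4 -> Prop) : Prop :=
  exists (M : 'M[algC]_8) (c : algC),
    (forall i j, M i j \is Num.real) /\ 0 < c /\ M *m M^T = c%:M /\
    (forall y, E8 y <-> exists v, L v /\ y = toR8 v *m M).

(* Main.v *)
Require Import Defs.
From mathcomp Require Import all_boot all_order all_algebra all_field.
From mathcomp Require Import ring lra zify.
Set Implicit Arguments. Unset Strict Implicit. Unset Printing Implicit Defensive.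
Import Order.TTheory GRing.Theory Num.Theory.
Local Open Scope ring_scope.

Definition eis (a b : int) : algC := a%:~R + b%:~R * omega.

Lemma s3_neq0 : sqrtC (3%:R : algC) != 0.
Proof. by rewrite sqrtC_eq0 pnatr_eq0. Qed.

Ltac fld := field; rewrite ?pnatr_eq0 ?s3_neq0 //.

Lemma s3_real : sqrtC (3%:R : algC) \is Num.real.
Proof. by apply: sqrtC_real; rewrite ler0n. Qed.

Lemma omega2 : omega * omega = - 1 - omega.
Proof.
set s := sqrtC (3%:R : algC).
have e : ('i * s) ^+ 2 = - 3%:R by rewrite exprMn sqrCi sqrtCK; ring.
have -> : omega * omega = (('i * s) ^+ 2 + 3%:R) / 4%:R - omega - 1.
  by rewrite /omega /s; fld.
by rewrite e; fld.
Qed.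

Lemma omega_conj : omega^* = - 1 - omega.
Proof.
rewrite /omega rmorphM rmorphD rmorphN rmorph1 rmorphM /= conjCi fmorphV /= conjC_nat.
rewrite (conj_Creal s3_real); fld.
Qed.

Lemma eisD a b c d : eis a b + eis c d = eis (a + c) (b + d).
Proof. rewrite /eis; ring. Qed.
Lemma eisN a b : - eis a b = eis (- a) (- b).
Proof. rewrite /eis; ring. Qed.
Lemma eisB a b c d : eis a b - eis c d = eis (a - c) (b - d).
Proof. rewrite /eis; ring. Qed.
Lemma eisM a b c d : eis a b * eis c d = eis (a * c - b * d) (a * d + b * c - b * d).
Proof.
rewrite /eis.
have -> : (a%:~R + b%:~R * omega) * (c%:~R + d%:~R * omega)
   = a%:~R * c%:~R + (a%:~R * d%:~R + b%:~R * c%:~R) * omega + b%:~R * d%:~R * (omega * omega) :> algC by ring.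
rewrite omega2; ring.
Qed.
Lemma eis_conj a b : (eis a b)^* = eis (a - b) (- b).
Proof. rewrite /eis rmorphD rmorphM /= !(conj_Creal (realz _ _)) omega_conj; ring. Qed.

Lemma eis_inj a b c d : eis a b = eis c d -> a = c /\ b = d.
Proof.
move=> h.
have h0 : (a - c)%:~R + (b - d)%:~R * omega = 0 :> algC.
  by move: h; rewrite /eis => h; rewrite !intrB; move/eqP: h; rewrite -subr_eq0 => /eqP <-; ring.
set u := a - c in h0; set v := b - d in h0.
have h1 : ((u ^+ 2 - u * v + v ^+ 2)%:~R : algC) = 0.
  have -> : ((u ^+ 2 - u * v + v ^+ 2)%:~R : algC)
     = (u%:~R - v%:~R - v%:~R * omega) * (u%:~R + v%:~R * omega) + (v%:~R)^+2 * (omega * omega + omega + 1).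
    by ring.
  by rewrite h0 omega2; ring.
move/eqP: h1; rewrite intr_eq0 => /eqP h1.
have : u = 0 /\ v = 0 by nia.
rewrite /u /v; case=> h2 h3; split; lia.
Qed.

Lemma eis_congr a b c d : a = c -> b = d -> eis a b = eis c d.
Proof. by move=> -> ->. Qed.

Lemma theta_eis : theta = eis 1 2.
Proof. rewrite /theta /omegab omega_conj /eis; ring. Qed.
Lemma omega_eis : omega = eis 0 1.
Proof. rewrite /eis; ring. Qed.
Lemma omegab_eis : omegab = eis (-1) (-1).
Proof. rewrite /omegab omega_conj /eis; ring. Qed.
Lemma zero_eis : 0 = eis 0 0.
Proof. rewrite /eis; ring. Qed.
Lemma one_eis : 1 = eis 1 0.
Proof. rewrite /eis; ring. Qed.

Lemma ReE_eis a b : 'Re (eis a b) = a%:~R - b%:~R / 2%:R.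
Proof.
rewrite ReE eis_conj /eis.
have -> : omega = (-1 + 'i * sqrtC 3%:R) / 2%:R by [].
rewrite !intrB intrN; fld.
Qed.

Lemma ImE_eis a b : 'Im (eis a b) = b%:~R * sqrtC 3%:R / 2%:R.
Proof.
rewrite ImE eis_conj /eis.
transitivity (- ('i ^+ 2) * b%:~R * sqrtC 3%:R / 2%:R :> algC); last by rewrite sqrCi; ring.
rewrite /omega !intrB intrN; fld.
Qed.
Lemma vec4Z (k a b c d : algC) : k *: vec4 a b c d = vec4 (k * a) (k * b) (k * c) (k * d).
Proof. by apply/rowP => i; rewrite !mxE; case: i => [[|[|[|[|]]]]]. Qed.
Lemma vec4D (a b c d a' b' c' d' : algC) :
  vec4 a b c d + vec4 a' b' c' d' = vec4 (a + a') (b + b') (c + c') (d + d').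
Proof. by apply/rowP => i; rewrite !mxE; case: i => [[|[|[|[|]]]]]. Qed.
Lemma vec4_inj (a b c d a' b' c' d' : algC) :
  vec4 a b c d = vec4 a' b' c' d' -> [/\ a = a', b = b', c = c' & d = d'].
Proof.
move=> h.
have e := fun i => congr1 (fun v : 'rV_4 => v 0 i) h.
move: (e ord0) (e (inord 1)) (e (inord 2)) (e (inord 3)).
by rewrite !mxE !inordK.
Qed.
Lemma vec4_conj (a b c d : algC) :
  map_mx (fun z : algC => z^*) (vec4 a b c d) = vec4 a^* b^* c^* d^*.
Proof. by apply/rowP => i; rewrite !mxE; case: i => [[|[|[|[|]]]]]. Qed.

Lemma espan_ext s s' v : (forall i, s i = s' i) -> espan s v -> espan s' v.
Proof.
move=> e [c [hc ->]]; exists c; split => //.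
by apply: eq_bigr => i _; rewrite e.
Qed.

Lemma conjS_fam4 a b c d i :
  conjS (fam4 a b c d) i = fam4 (map_mx (fun z : algC => z^*) a) (map_mx (fun z : algC => z^*) b)
     (map_mx (fun z : algC => z^*) c) (map_mx (fun z : algC => z^*) d) i.
Proof.
rewrite /conjS /fam4; case: i => [[|[|[|[|]]]]] //= _.
Qed.

Lemma espan_fam4 a b c d v :
  espan (fam4 a b c d) v <->
  exists c0 c1 c2 c3, [/\ is_eis c0, is_eis c1, is_eis c2, is_eis c3 &
     v = c0 *: a + c1 *: b + c2 *: c + c3 *: d].
Proof.
split.
  case=> k [hk ->]; rewrite !big_ord_recl big_ord0 addr0 !addrA.
  do 4 eexists; split; [apply: hk | apply: hk | apply: hk | apply: hk | reflexivity].
case=> c0 [c1 [c2 [c3 [h0 h1 h2 h3 ->]]]].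
exists (fun i : 'I_4 => nth 0 [:: c0; c1; c2; c3] i); split.
  by case => [[|[|[|[|]]]]].
by rewrite !big_ord_recl big_ord0 addr0 /fam4 !addrA.
Qed.

Lemma is_eisE a b : is_eis (eis a b).
Proof. by exists a, b. Qed.
Lemma is_eisP z : is_eis z -> exists a b, z = eis a b.
Proof. by []. Qed.

Ltac to_eis := rewrite ?/w ?/wb ?theta_eis ?omegab_eis ?omega_eis ?zero_eis ?one_eis.
Ltac enorm := rewrite ?(vec4Z, vec4D) ?(eisM, eisD, eisN, eisB).
Ltac eclose := congr vec4; apply: eis_congr; lia.

Definition qtab : seq (seq int) :=
  [:: [:: -1; -1; 0; 0; 0; 0; 0; 0];
   [:: 1; -1; -2; 0; 0; 0; 0; 0];
   [:: 0; 0; 0; -1; -1; 0; 0; 0];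
   [:: 0; 0; 0; 1; -1; -2; 0; 0];
   [:: 0; 0; 0; 0; 0; 0; -1; -1];
   [:: -1; 1; -1; -1; 1; -1; 0; 0];
   [:: 0; 0; 0; 0; 0; 0; 1; -1];
   [:: -1; 1; -1; 1; -1; 1; 0; 0]].
Definition dd (i : nat) : algC := if odd i then (sqrtC 3%:R)^-1 else 1.
Definition qq (i j : nat) : algC := (nth 0 (nth [::] qtab i) j)%:~R / 3%:R.
Definition Mx : 'M[algC]_8 := \matrix_(i < 8, j < 8) (dd i * qq i j).
Definition row8 (x0 x1 x2 x3 x4 x5 x6 x7 : algC) : 'rV[algC]_8 :=
  \row_(i < 8) nth 0 [:: x0; x1; x2; x3; x4; x5; x6; x7] i.
Definition phi (a1 b1 a2 b2 a3 b3 a4 b4 : int) : 'rV[algC]_8 :=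
  row8 ((-2 * a1 + 2 * b1 + -1 * b3 + -1 * b4)%:~R / 6%:R) ((-2 * a1 + b3 + b4)%:~R / 6%:R) ((-2 * b1 + -1 * b3 + -1 * b4)%:~R / 6%:R) ((-2 * a2 + 2 * b2 + -1 * b3 + b4)%:~R / 6%:R) ((-2 * a2 + b3 + -1 * b4)%:~R / 6%:R) ((-2 * b2 + -1 * b3 + b4)%:~R / 6%:R) ((-2 * a3 + b3 + 2 * a4 + -1 * b4)%:~R / 6%:R) ((-2 * a3 + b3 + -2 * a4 + b4)%:~R / 6%:R).

Lemma toR8M a1 b1 a2 b2 a3 b3 a4 b4 :
  toR8 (vec4 (eis a1 b1) (eis a2 b2) (eis a3 b3) (eis a4 b4)) *m Mx =
  phi a1 b1 a2 b2 a3 b3 a4 b4.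
Proof.
apply/rowP => j; rewrite !mxE !big_ord_recr big_ord0 /= !mxE /=.
rewrite !inordK //= !ReE_eis !ImE_eis /dd /=.
case: j => [[|[|[|[|[|[|[|[|]]]]]]]]] //= _; rewrite /qq /=; fld.
Qed.

Lemma Mx_real i j : Mx i j \is Num.real.
Proof.
rewrite mxE /dd /qq; case: (odd i); rewrite ?mul1r; do ? apply: rpredM; 
  rewrite ?rpredV ?realz ?realn ?s3_real //.
Qed.

Lemma QQt (i j : nat) : (i < 8)%N -> (j < 8)%N -> \sum_(k < 8) qq i k * qq j k =
  if i == j then (if odd i then 2%:R / 3%:R else 2%:R / 9%:R) else 0.
Proof.
rewrite !big_ord_recr big_ord0 /=.
case: i => [|[|[|[|[|[|[|[|]]]]]]]] //= _; case: j => [|[|[|[|[|[|[|[|]]]]]]]] //= _;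
 rewrite /qq /=; fld.
Qed.

Lemma MMt : Mx *m Mx^T = (2%:R / 9%:R)%:M.
Proof.
apply/matrixP => i j; rewrite !mxE.
transitivity (dd i * dd j * \sum_(k < 8) qq i k * qq j k).
  rewrite mulr_sumr; apply: eq_bigr => k _; rewrite !mxE; ring.
rewrite QQt //; case: (eqVneq i j) => [<-|ne]; last by rewrite (negbTE (ne : val i != val j)) mulr0 /= mulr0n.
rewrite eqxx mulr1n /dd; case: (odd i); last by ring.
rewrite -expr2 exprVn sqrtCK; fld.
Qed.

Lemma is_eis0 : is_eis 0.
Proof. by exists 0, 0; rewrite /eis; ring. Qed.
Lemma is_eisD x y : is_eis x -> is_eis y -> is_eis (x + y).
Proof. by case/is_eisP => a [b ->]; case/is_eisP => c [d ->]; rewrite eisD; apply: is_eisE. Qed.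
Lemma is_eisM x y : is_eis x -> is_eis y -> is_eis (x * y).
Proof. by case/is_eisP => a [b ->]; case/is_eisP => c [d ->]; rewrite eisM; apply: is_eisE. Qed.

Lemma espan0 s : espan s 0.
Proof.
exists (fun _ => 0); split; first by move=> _; apply: is_eis0.
by rewrite big1 // => i _; rewrite scale0r.
Qed.
Lemma espan_add s x y : espan s x -> espan s y -> espan s (x + y).
Proof.
case=> [c [hc ->]] [c' [hc' ->]]; exists (fun i => c i + c' i); split.
  by move=> i; apply: is_eisD.
by rewrite -big_split; apply: eq_bigr => i _; rewrite scalerDl.
Qed.
Lemma espan_scale s k x : is_eis k -> espan s x -> espan s (k *: x).
Proof.
move=> hk [c [hc ->]]; exists (fun i => k * c i); split.
  by move=> i; apply: is_eisM.
by rewrite scaler_sumr; apply: eq_bigr => i _; rewrite scalerA.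
Qed.
Lemma espan_sub s s' v : (forall i, espan s' (s i)) -> espan s v -> espan s' v.
Proof.
move=> h [c [hc ->]]; apply: (big_ind (espan s')).
- exact: espan0.
- exact: espan_add.
- by move=> i _; apply: espan_scale.
Qed.
Lemma espan_conjS a b c d v :
  espan (fam4 (map_mx (fun z : algC => z^*) a) (map_mx (fun z : algC => z^*) b)
     (map_mx (fun z : algC => z^*) c) (map_mx (fun z : algC => z^*) d)) v ->
  espan (conjS (fam4 a b c d)) v.
Proof. by apply: espan_ext => i; rewrite conjS_fam4. Qed.
Lemma TinS1 (i : 'I_4) : espan (S 1) (T i).
Proof.
case: i => [[|[|[|[|]]]]] // Hi; rewrite /S.
- rewrite /S1 /T /fam4 /=; apply/espan_fam4.
  exists (eis (1) (2)), (eis (0) (0)), (eis (0) (0)), (eis (0) (0)); split; try apply: is_eisE.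
  to_eis; enorm; eclose.
- rewrite /S1 /T /fam4 /=; apply/espan_fam4.
  exists (eis (0) (0)), (eis (1) (2)), (eis (0) (0)), (eis (0) (0)); split; try apply: is_eisE.
  to_eis; enorm; eclose.
- rewrite /S1 /T /fam4 /=; apply/espan_fam4.
  exists (eis (1) (0)), (eis (1) (0)), (eis (1) (0)), (eis (0) (0)); split; try apply: is_eisE.
  to_eis; enorm; eclose.
- rewrite /S1 /T /fam4 /=; apply/espan_fam4.
  exists (eis (0) (0)), (eis (1) (0)), (eis (-1) (0)), (eis (1) (0)); split; try apply: is_eisE.
  to_eis; enorm; eclose.
Qed.

Lemma TinS2 (i : 'I_4) : espan (S 2) (T i).
Proof.
case: i => [[|[|[|[|]]]]] // Hi; rewrite /S.
- rewrite /S2 /T /fam4 /=; apply/espan_fam4.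
  exists (eis (0) (0)), (eis (-1) (0)), (eis (-1) (0)), (eis (-1) (0)); split; try apply: is_eisE.
  to_eis; enorm; eclose.
- rewrite /S2 /T /fam4 /=; apply/espan_fam4.
  exists (eis (-1) (0)), (eis (0) (0)), (eis (1) (0)), (eis (-1) (0)); split; try apply: is_eisE.
  to_eis; enorm; eclose.
- rewrite /S2 /T /fam4 /=; apply/espan_fam4.
  exists (eis (0) (0)), (eis (0) (0)), (eis (0) (0)), (eis (1) (2)); split; try apply: is_eisE.
  to_eis; enorm; eclose.
- rewrite /S2 /T /fam4 /=; apply/espan_fam4.
  exists (eis (1) (2)), (eis (0) (0)), (eis (0) (0)), (eis (0) (0)); split; try apply: is_eisE.
  to_eis; enorm; eclose.
Qed.

Lemma TinS3 (i : 'I_4) : espan (S 3) (T i).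
Proof.
case: i => [[|[|[|[|]]]]] // Hi; rewrite /S.
- rewrite /S3 /T /fam4 /=; apply/espan_fam4.
  exists (eis (0) (0)), (eis (-1) (0)), (eis (-1) (0)), (eis (-1) (0)); split; try apply: is_eisE.
  to_eis; enorm; eclose.
- rewrite /S3 /T /fam4 /=; apply/espan_fam4.
  exists (eis (-1) (0)), (eis (0) (0)), (eis (-1) (-1)), (eis (1) (1)); split; try apply: is_eisE.
  to_eis; enorm; eclose.
- rewrite /S3 /T /fam4 /=; apply/espan_fam4.
  exists (eis (0) (0)), (eis (0) (1)), (eis (0) (1)), (eis (1) (0)); split; try apply: is_eisE.
  to_eis; enorm; eclose.
- rewrite /S3 /T /fam4 /=; apply/espan_fam4.
  exists (eis (1) (1)), (eis (1) (0)), (eis (-1) (0)), (eis (0) (0)); split; try apply: is_eisE.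
  to_eis; enorm; eclose.
Qed.

Lemma TinS4 (i : 'I_4) : espan (S 4) (T i).
Proof.
case: i => [[|[|[|[|]]]]] // Hi; rewrite /S.
- rewrite /S4 /T /fam4 /=; apply/espan_fam4.
  exists (eis (0) (0)), (eis (-1) (0)), (eis (-1) (0)), (eis (-1) (0)); split; try apply: is_eisE.
  to_eis; enorm; eclose.
- rewrite /S4 /T /fam4 /=; apply/espan_fam4.
  exists (eis (-1) (0)), (eis (0) (0)), (eis (1) (0)), (eis (-1) (0)); split; try apply: is_eisE.
  to_eis; enorm; eclose.
- rewrite /S4 /T /fam4 /=; apply/espan_fam4.
  exists (eis (0) (1)), (eis (0) (1)), (eis (0) (0)), (eis (1) (1)); split; try apply: is_eisE.
  to_eis; enorm; eclose.
- rewrite /S4 /T /fam4 /=; apply/espan_fam4.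
  exists (eis (1) (0)), (eis (0) (0)), (eis (0) (-1)), (eis (0) (1)); split; try apply: is_eisE.
  to_eis; enorm; eclose.
Qed.

Lemma TinS5 (i : 'I_4) : espan (S 5) (T i).
Proof.
case: i => [[|[|[|[|]]]]] // Hi; rewrite /S.
- rewrite /S5 /T /fam4 /=; apply/espan_fam4.
  exists (eis (0) (0)), (eis (-1) (0)), (eis (-1) (0)), (eis (-1) (0)); split; try apply: is_eisE.
  to_eis; enorm; eclose.
- rewrite /S5 /T /fam4 /=; apply/espan_fam4.
  exists (eis (-1) (0)), (eis (0) (0)), (eis (-1) (-1)), (eis (1) (1)); split; try apply: is_eisE.
  to_eis; enorm; eclose.
- rewrite /S5 /T /fam4 /=; apply/espan_fam4.
  exists (eis (0) (1)), (eis (1) (1)), (eis (0) (1)), (eis (0) (0)); split; try apply: is_eisE.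
  to_eis; enorm; eclose.
- rewrite /S5 /T /fam4 /=; apply/espan_fam4.
  exists (eis (0) (0)), (eis (-1) (-1)), (eis (0) (1)), (eis (1) (0)); split; try apply: is_eisE.
  to_eis; enorm; eclose.
Qed.

Lemma TinS6 (i : 'I_4) : espan (S 6) (T i).
Proof.
case: i => [[|[|[|[|]]]]] // Hi; rewrite /S.
- rewrite /S6 /T /fam4 /=; apply/espan_fam4.
  exists (eis (0) (0)), (eis (-1) (0)), (eis (-1) (0)), (eis (-1) (0)); split; try apply: is_eisE.
  to_eis; enorm; eclose.
- rewrite /S6 /T /fam4 /=; apply/espan_fam4.
  exists (eis (-1) (0)), (eis (0) (0)), (eis (0) (1)), (eis (0) (-1)); split; try apply: is_eisE.
  to_eis; enorm; eclose.
- rewrite /S6 /T /fam4 /=; apply/espan_fam4.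
  exists (eis (0) (1)), (eis (0) (0)), (eis (1) (1)), (eis (0) (1)); split; try apply: is_eisE.
  to_eis; enorm; eclose.
- rewrite /S6 /T /fam4 /=; apply/espan_fam4.
  exists (eis (1) (1)), (eis (1) (1)), (eis (0) (0)), (eis (-1) (-1)); split; try apply: is_eisE.
  to_eis; enorm; eclose.
Qed.

Lemma TinS7 (i : 'I_4) : espan (S 7) (T i).
Proof.
case: i => [[|[|[|[|]]]]] // Hi; rewrite /S.
- apply: espan_conjS; rewrite /S3 /T /fam4 /= !vec4_conj; apply/espan_fam4.
  exists (eis (0) (0)), (eis (-1) (0)), (eis (-1) (0)), (eis (-1) (0)); split; try apply: is_eisE.
  to_eis; rewrite ?eisN ?eis_conj; enorm; eclose.
- apply: espan_conjS; rewrite /S3 /T /fam4 /= !vec4_conj; apply/espan_fam4.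
  exists (eis (-1) (0)), (eis (0) (0)), (eis (0) (1)), (eis (0) (-1)); split; try apply: is_eisE.
  to_eis; rewrite ?eisN ?eis_conj; enorm; eclose.
- apply: espan_conjS; rewrite /S3 /T /fam4 /= !vec4_conj; apply/espan_fam4.
  exists (eis (0) (0)), (eis (1) (1)), (eis (1) (1)), (eis (-1) (0)); split; try apply: is_eisE.
  to_eis; rewrite ?eisN ?eis_conj; enorm; eclose.
- apply: espan_conjS; rewrite /S3 /T /fam4 /= !vec4_conj; apply/espan_fam4.
  exists (eis (0) (1)), (eis (-1) (0)), (eis (1) (0)), (eis (0) (0)); split; try apply: is_eisE.
  to_eis; rewrite ?eisN ?eis_conj; enorm; eclose.
Qed.

Lemma TinS8 (i : 'I_4) : espan (S 8) (T i).
Proof.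
case: i => [[|[|[|[|]]]]] // Hi; rewrite /S.
- apply: espan_conjS; rewrite /S4 /T /fam4 /= !vec4_conj; apply/espan_fam4.
  exists (eis (0) (0)), (eis (-1) (0)), (eis (-1) (0)), (eis (-1) (0)); split; try apply: is_eisE.
  to_eis; rewrite ?eisN ?eis_conj; enorm; eclose.
- apply: espan_conjS; rewrite /S4 /T /fam4 /= !vec4_conj; apply/espan_fam4.
  exists (eis (-1) (0)), (eis (0) (0)), (eis (1) (0)), (eis (-1) (0)); split; try apply: is_eisE.
  to_eis; rewrite ?eisN ?eis_conj; enorm; eclose.
- apply: espan_conjS; rewrite /S4 /T /fam4 /= !vec4_conj; apply/espan_fam4.
  exists (eis (1) (1)), (eis (1) (1)), (eis (0) (0)), (eis (0) (1)); split; try apply: is_eisE.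
  to_eis; rewrite ?eisN ?eis_conj; enorm; eclose.
- apply: espan_conjS; rewrite /S4 /T /fam4 /= !vec4_conj; apply/espan_fam4.
  exists (eis (-1) (0)), (eis (0) (0)), (eis (-1) (-1)), (eis (1) (1)); split; try apply: is_eisE.
  to_eis; rewrite ?eisN ?eis_conj; enorm; eclose.
Qed.

Lemma TinS9 (i : 'I_4) : espan (S 9) (T i).
Proof.
case: i => [[|[|[|[|]]]]] // Hi; rewrite /S.
- apply: espan_conjS; rewrite /S5 /T /fam4 /= !vec4_conj; apply/espan_fam4.
  exists (eis (0) (0)), (eis (-1) (0)), (eis (-1) (0)), (eis (-1) (0)); split; try apply: is_eisE.
  to_eis; rewrite ?eisN ?eis_conj; enorm; eclose.
- apply: espan_conjS; rewrite /S5 /T /fam4 /= !vec4_conj; apply/espan_fam4.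
  exists (eis (-1) (0)), (eis (0) (0)), (eis (0) (1)), (eis (0) (-1)); split; try apply: is_eisE.
  to_eis; rewrite ?eisN ?eis_conj; enorm; eclose.
- apply: espan_conjS; rewrite /S5 /T /fam4 /= !vec4_conj; apply/espan_fam4.
  exists (eis (1) (1)), (eis (0) (1)), (eis (1) (1)), (eis (0) (0)); split; try apply: is_eisE.
  to_eis; rewrite ?eisN ?eis_conj; enorm; eclose.
- apply: espan_conjS; rewrite /S5 /T /fam4 /= !vec4_conj; apply/espan_fam4.
  exists (eis (0) (0)), (eis (0) (-1)), (eis (1) (1)), (eis (-1) (0)); split; try apply: is_eisE.
  to_eis; rewrite ?eisN ?eis_conj; enorm; eclose.
Qed.

Lemma TinS10 (i : 'I_4) : espan (S 10) (T i).
Proof.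
case: i => [[|[|[|[|]]]]] // Hi; rewrite /S.
- apply: espan_conjS; rewrite /S6 /T /fam4 /= !vec4_conj; apply/espan_fam4.
  exists (eis (0) (0)), (eis (-1) (0)), (eis (-1) (0)), (eis (-1) (0)); split; try apply: is_eisE.
  to_eis; rewrite ?eisN ?eis_conj; enorm; eclose.
- apply: espan_conjS; rewrite /S6 /T /fam4 /= !vec4_conj; apply/espan_fam4.
  exists (eis (-1) (0)), (eis (0) (0)), (eis (-1) (-1)), (eis (1) (1)); split; try apply: is_eisE.
  to_eis; rewrite ?eisN ?eis_conj; enorm; eclose.
- apply: espan_conjS; rewrite /S6 /T /fam4 /= !vec4_conj; apply/espan_fam4.
  exists (eis (1) (1)), (eis (0) (0)), (eis (0) (1)), (eis (1) (1)); split; try apply: is_eisE.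
  to_eis; rewrite ?eisN ?eis_conj; enorm; eclose.
- apply: espan_conjS; rewrite /S6 /T /fam4 /= !vec4_conj; apply/espan_fam4.
  exists (eis (0) (1)), (eis (0) (1)), (eis (0) (0)), (eis (0) (-1)); split; try apply: is_eisE.
  to_eis; rewrite ?eisN ?eis_conj; enorm; eclose.
Qed.

Lemma TinLam k : (1 <= k <= 10)%N -> forall i, espan (S k) (T i).
Proof.
case: k => [|[|[|[|[|[|[|[|[|[|[|]]]]]]]]]]] // _.
exact: TinS1. exact: TinS2. exact: TinS3. exact: TinS4. exact: TinS5.
exact: TinS6. exact: TinS7. exact: TinS8. exact: TinS9. exact: TinS10.
Qed.

Lemma L12_sub v : Lam 1 v -> Lam 2 v -> espan T v.
Proof.
rewrite /Lam /S /S1 /S2 => /espan_fam4 [c0 [c1 [c2 [c3 [h0 h1 h2 h3 ->]]]]].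
move=> /espan_fam4 [d0 [d1 [d2 [d3 [k0 k1 k2 k3]]]]].
case/is_eisP: h0 => a0 [b0 ->]; case/is_eisP: h1 => a1 [b1 ->].
case/is_eisP: h2 => a2 [b2 ->]; case/is_eisP: h3 => a3 [b3 ->].
case/is_eisP: k0 => p0 [q0 ->]; case/is_eisP: k1 => p1 [q1 ->].
case/is_eisP: k2 => p2 [q2 ->]; case/is_eisP: k3 => p3 [q3 ->].
to_eis; enorm.
move/vec4_inj => [/eis_inj [e1 e2] /eis_inj [e3 e4] /eis_inj [e5 e6] /eis_inj [e7 e8]].
rewrite /T /fam4; apply/espan_fam4.
exists (eis (- p1) (- q1)), (eis (p2 - p1) (q2 - q1)), (eis (a0 + p1 - 2 * q1) (b0 + 2 * p1 - q1)), (eis a3 b3).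
split; try apply: is_eisE.
to_eis; enorm; eclose.
Qed.

Lemma row8_eta (F : 'I_8 -> algC) : \row_i F i =
  row8 (F (inord 0)) (F (inord 1)) (F (inord 2)) (F (inord 3))
       (F (inord 4)) (F (inord 5)) (F (inord 6)) (F (inord 7)).
Proof.
apply/rowP => i; rewrite !mxE; case: i => [[|[|[|[|[|[|[|[|]]]]]]]]] // Hi /=;
  congr F; apply: val_inj; by rewrite /= inordK.
Qed.

Lemma sum_row8 x0 x1 x2 x3 x4 x5 x6 x7 :
  \sum_(i < 8) row8 x0 x1 x2 x3 x4 x5 x6 x7 0 i = x0 + x1 + x2 + x3 + x4 + x5 + x6 + x7.
Proof. rewrite !big_ord_recr big_ord0 /= !mxE /=; ring. Qed.

Lemma E8_int y (z0 z1 z2 z3 z4 z5 z6 z7 m : int) :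
  y = row8 z0%:~R z1%:~R z2%:~R z3%:~R z4%:~R z5%:~R z6%:~R z7%:~R ->
  z0 + z1 + z2 + z3 + z4 + z5 + z6 + z7 = 2 * m -> E8 y.
Proof.
move=> -> hm; split.
  exists (fun i => nth 0 [:: z0; z1; z2; z3; z4; z5; z6; z7] i); left.
  by rewrite row8_eta !inordK.
exists m; rewrite sum_row8 -hm; ring.
Qed.

Lemma E8_half y (z0 z1 z2 z3 z4 z5 z6 z7 m : int) :
  y = row8 (z0%:~R + 2%:R^-1) (z1%:~R + 2%:R^-1) (z2%:~R + 2%:R^-1) (z3%:~R + 2%:R^-1)
           (z4%:~R + 2%:R^-1) (z5%:~R + 2%:R^-1) (z6%:~R + 2%:R^-1) (z7%:~R + 2%:R^-1) ->
  z0 + z1 + z2 + z3 + z4 + z5 + z6 + z7 + 4 = 2 * m -> E8 y.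
Proof.
move=> -> hm; split.
  exists (fun i => nth 0 [:: z0; z1; z2; z3; z4; z5; z6; z7] i); right.
  by rewrite row8_eta !inordK.
exists m; rewrite sum_row8 -hm; fld.
Qed.

Lemma E8_elim y : E8 y ->
  (exists z0 z1 z2 z3 z4 z5 z6 z7 m : int,
    y = row8 z0%:~R z1%:~R z2%:~R z3%:~R z4%:~R z5%:~R z6%:~R z7%:~R /\
    z0 + z1 + z2 + z3 + z4 + z5 + z6 + z7 = 2 * m) \/
  (exists z0 z1 z2 z3 z4 z5 z6 z7 m : int,
    y = row8 (z0%:~R + 2%:R^-1) (z1%:~R + 2%:R^-1) (z2%:~R + 2%:R^-1) (z3%:~R + 2%:R^-1)
           (z4%:~R + 2%:R^-1) (z5%:~R + 2%:R^-1) (z6%:~R + 2%:R^-1) (z7%:~R + 2%:R^-1) /\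
    z0 + z1 + z2 + z3 + z4 + z5 + z6 + z7 + 4 = 2 * m).
Proof.
case=> [[z [-> | ->]] [m hm]]; rewrite row8_eta in hm *; rewrite sum_row8 in hm.
  left; do 8 eexists; exists m; split; first reflexivity.
  apply/eqP; rewrite -(eqr_int algC); apply/eqP; rewrite -hm; ring.
right; do 8 eexists; exists m; split; first reflexivity.
apply/eqP; rewrite -(eqr_int algC); apply/eqP; rewrite -hm; fld.
Qed.

Lemma int_parity (q : int) : exists t : int, q = 2 * t \/ q = 2 * t + 1.
Proof.
exists (q %/ 2)%Z.
have h1 := divz_eq q 2.
have h2 : (0 <= (q %% 2)%Z)%R by apply: modz_ge0.
have h3 : ((q %% 2)%Z < 2)%R by apply: ltz_pmod.
lia.
Qed.

Lemma E8_image v : espan T v -> E8 (toR8 v *m Mx).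
Proof.
rewrite /T /fam4 => /espan_fam4 [f0 [f1 [f2 [f3 [h0 h1 h2 h3 ->]]]]].
case/is_eisP: h0 => p0 [q0 ->]; case/is_eisP: h1 => p1 [q1 ->].
case/is_eisP: h2 => p2 [q2 ->]; case/is_eisP: h3 => p3 [q3 ->].
to_eis; enorm; rewrite toR8M /phi.
have [t [e | e]] := int_parity q2; subst q2.
  apply: (@E8_int _ (p0 + (-1) * q0 + t) (p0 + t) (q0 + (-1) * p2 + t) (p1 + (-1) * q1 + p3 + t) (p1 + (-1) * p3 + q3 + t) (q1 + (-1) * p2 + t) ((-1) * q3 + t) (t) (p0 + p1 - p2 + 2 * (2 * t))); last by lia.
  congr row8; fld.
apply: (@E8_half _ (p0 + (-1) * q0 + t) (p0 + t) (q0 + (-1) * p2 + t) (p1 + (-1) * q1 + p3 + t) (p1 + (-1) * p3 + q3 + t) (q1 + (-1) * p2 + t) ((-1) * q3 + t) (t) (p0 + p1 - p2 + 2 * (2 * t + 1))); last by lia.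
congr row8; fld.
Qed.

Lemma E8_pre y : E8 y -> exists v, espan T v /\ y = toR8 v *m Mx.
Proof.
case/E8_elim => [[z0 [z1 [z2 [z3 [z4 [z5 [z6 [z7 [m [-> hm]]]]]]]]]] | [z0 [z1 [z2 [z3 [z4 [z5 [z6 [z7 [m [-> hm]]]]]]]]]]].
  have -> : z7 = 2 * m - (z0 + z1 + z2 + z3 + z4 + z5 + z6) by lia.
  exists (vec4 (eis ((-1) * z0 + (-2) * z1 + (-1) * z2) (z0 + (-1) * z1 + (-2) * z2)) (eis ((-1) * z3 + (-2) * z4 + (-1) * z5) (z3 + (-1) * z4 + (-2) * z5)) (eis (z0 + (2) * z1 + z2 + z3 + (2) * z4 + z5 + (-3) * m) ((-1) * z0 + z1 + (-1) * z2 + (-1) * z3 + z4 + (-1) * z5)) (eis (z0 + (2) * z1 + z2 + (2) * z3 + z4 + (2) * z5 + (3) * z6 + (-3) * m) ((-1) * z0 + z1 + (-1) * z2 + z3 + (-1) * z4 + z5))); split.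
    rewrite /T /fam4; apply/espan_fam4; exists (eis (z0 + (2) * z1 + z2 + z3 + z4 + z5 + z6 + (-2) * m) ((-1) * z0 + z1)), (eis (z0 + (2) * z1 + z2 + (2) * z3 + (2) * z4 + (2) * z5 + (2) * z6 + (-3) * m) ((-1) * z0 + z1 + (-1) * z2 + z5)), (eis ((-2) * z0 + (-2) * z2 + (-1) * z3 + (-1) * z4 + (-1) * z5 + (-1) * z6 + (2) * m) ((-2) * z0 + (-2) * z1 + (-2) * z2 + (-2) * z3 + (-2) * z4 + (-2) * z5 + (-2) * z6 + (4) * m)), (eis ((-1) * z0 + (-1) * z2 + (-1) * z4 + (-1) * z6 + m) ((-1) * z0 + (-1) * z1 + (-1) * z2 + (-1) * z3 + (-1) * z4 + (-1) * z5 + (-2) * z6 + (2) * m)); split; try apply: is_eisE.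
    to_eis; enorm; eclose.
  rewrite toR8M /phi; congr row8; fld.
have -> : z7 = 2 * m - 4 - (z0 + z1 + z2 + z3 + z4 + z5 + z6) by lia.
exists (vec4 (eis ((-1) * z0 + (-2) * z1 + (-1) * z2 + (-2) * 1) (z0 + (-1) * z1 + (-2) * z2 + (-1) * 1)) (eis ((-1) * z3 + (-2) * z4 + (-1) * z5 + (-2) * 1) (z3 + (-1) * z4 + (-2) * z5 + (-1) * 1)) (eis (z0 + (2) * z1 + z2 + z3 + (2) * z4 + z5 + (-3) * m + (4) * 1) ((-1) * z0 + z1 + (-1) * z2 + (-1) * z3 + z4 + (-1) * z5 + (-1) * 1)) (eis (z0 + (2) * z1 + z2 + (2) * z3 + z4 + (2) * z5 + (3) * z6 + (-3) * m + (6) * 1) ((-1) * z0 + z1 + (-1) * z2 + z3 + (-1) * z4 + z5))); split.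
  rewrite /T /fam4; apply/espan_fam4; exists (eis (z0 + (2) * z1 + z2 + z3 + z4 + z5 + z6 + (-2) * m + (4) * 1) ((-1) * z0 + z1)), (eis (z0 + (2) * z1 + z2 + (2) * z3 + (2) * z4 + (2) * z5 + (2) * z6 + (-3) * m + (6) * 1) ((-1) * z0 + z1 + (-1) * z2 + z5)), (eis ((-2) * z0 + (-2) * z2 + (-1) * z3 + (-1) * z4 + (-1) * z5 + (-1) * z6 + (2) * m + (-4) * 1) ((-2) * z0 + (-2) * z1 + (-2) * z2 + (-2) * z3 + (-2) * z4 + (-2) * z5 + (-2) * z6 + (4) * m + (-7) * 1)), (eis ((-1) * z0 + (-1) * z2 + (-1) * z4 + (-1) * z6 + m + (-2) * 1) ((-1) * z0 + (-1) * z1 + (-1) * z2 + (-1) * z3 + (-1) * z4 + (-1) * z5 + (-2) * z6 + (2) * m + (-4) * 1)); split; try apply: is_eisE.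
  to_eis; enorm; eclose.
rewrite toR8M /phi; congr row8; fld.
Qed.

Theorem mainTheorem5 :
  (forall v : 'rV[algC]_4,
      (forall k, (1 <= k <= 10)%N -> Lam k v) <-> (Lam 1 v /\ Lam 2 v)) /\
  (forall v : 'rV[algC]_4, (Lam 1 v /\ Lam 2 v) <-> espan T v) /\
  similar_to_E8 (fun v => Lam 1 v /\ Lam 2 v).
Proof.
have part2 : forall v : 'rV[algC]_4, (Lam 1 v /\ Lam 2 v) <-> espan T v.
  move=> v; split; first by case=> h1 h2; apply: L12_sub.
  by move=> h; split; apply: (espan_sub (TinLam _)) h.
split.
  move=> v; split; first by move=> h; split; apply: h.
  move=> /part2 h k hk; exact: (espan_sub (TinLam hk)) h.
split; first exact: part2.
exists Mx, (2%:R / 9%:R); split; first exact: Mx_real.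
split; first by rewrite divr_gt0 // ltr0n.
split; first exact: MMt.
move=> y; split.
  by case/E8_pre => v [hv ->]; exists v; split => //; apply/part2.
by case=> v [/part2 hv ->]; apply: E8_image.
Qed.
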